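(* Let $k$ be a positive integer and suppose the graph $G$ satisfies $\tau(G)=\overline{\tau}(G)=\kappa'(G)=\overline{\kappa'}(G)=k$. Then $G=G_1*_k G_2$ where, for each $i=1,2$, either $G_i=K_1$ or $\tau(G_i)=\overline{\tau}(G_i)=\kappa'(G_i)=\overline{\kappa'}(G_i)=k$.
   Context: Graphs are finite, loopless, possibly with multiple edges. $\kappa'(G)$ is the edge connectivity; $\tau(G)$ is the maximum number of edge-disjoint spanning trees of a connected graph $G$ ($\tau(K_1)=\infty$). $\overline{\kappa'}(G)=\max\{\kappa'(H): H\subseteq G\}$ and $\overline{\tau}(G)=\max\{\tau(H): H\subseteq G\}$, maxima over subgraphs. For vertex-disjoint connected graphs $G_1,G_2$ and a set $K$ of $k$ edges each having one end in $V(G_1)$ and the other in $V(G_2)$, the $k$-edge-join $G_1*_k G_2$ is the graph with vertex set $V(G_1)\cup V(G_2)$ and edge set $E(G_1)\cup E(G_2)\cup K$. *)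

(* Defs.v *)
(* Finite loopless multigraphs inside an ambient finite
   multigraph: vertex type T, edge type E, endpoint maps src/tgt
   (orientation irrelevant).  A graph is a pair (A, F) with A : {set T},
   F : {set E}, every edge of F having both ends in A. *)
From mathcomp Require Import all_boot all_order.
Set Implicit Arguments. Unset Strict Implicit. Unset Printing Implicit Defensive.

Section MultiGraphs.
Variables (T E : finType) (src tgt : E -> T).

Definition is_graph (A : {set T}) (F : {set E}) : bool :=
  [forall e in F, (src e \in A) && (tgt e \in A)].

Definition adj (F : {set E}) : rel T := fun x y =>
  [exists e in F, ((src e == x) && (tgt e == y)) || ((src e == y) && (tgt e == x))].

Definition connectedG (A : {set T}) (F : {set E}) : bool :=
  [forall x in A, forall y in A, connect (adj F) x y].

(* S is (the edge set of) a spanning tree of (A, F): S ⊆ F, (A, S) connected,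
   and minimally so (deleting any edge of S disconnects), i.e. acyclic. *)
Definition spanning_tree (A : {set T}) (F S : {set E}) : bool :=
  [&& S \subset F, connectedG A S & [forall e in S, ~~ connectedG A (S :\ e)]].

Definition has_trees (A : {set T}) (F : {set E}) (t : nat) : bool :=
  [exists Ts : {ffun 'I_t -> {set E}},
     [forall i, spanning_tree A F (Ts i)] &&
     [forall i, forall j, (i != j) ==> [disjoint Ts i & Ts j]]].

(* number of edge-disjoint spanning trees, for graphs with >= 2 vertices
   (there are at most #|F| of them, each being nonempty) *)
Definition tau_nat (A : {set T}) (F : {set E}) : nat :=
  \max_(t < #|F|.+1 | has_trees A F t) t.

(* tau(G) with tau(K_1) = infinity, encoded as None *)
Definition tau (A : {set T}) (F : {set E}) : option nat :=
  if #|A| <= 1 then None else Some (tau_nat A F).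

(* edge connectivity: least number of edges whose deletion disconnects G
   (0 if G is disconnected; 0 for K_1) *)
Definition kappa' (A : {set T}) (F : {set E}) : nat :=
  \big[minn/#|F|]_(S : {set E} | (S \subset F) && ~~ connectedG A (F :\: S)) #|S|.

Definition tau_bar (A : {set T}) (F : {set E}) : nat :=
  \max_(B : {set T} | B \subset A)
    \max_(H : {set E} | [&& H \subset F, is_graph B H & 1 < #|B|]) tau_nat B H.

Definition kappa'_bar (A : {set T}) (F : {set E}) : nat :=
  \max_(B : {set T} | B \subset A)
    \max_(H : {set E} | [&& H \subset F, is_graph B H & 1 < #|B|]) kappa' B H.

Definition all_eq_k (k : nat) (A : {set T}) (F : {set E}) : Prop :=
  [/\ tau A F = Some k, tau_bar A F = k, kappa' A F = k & kappa'_bar A F = k].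

Definition edge_join (k : nat) (A : {set T}) (F : {set E})
  (A1 : {set T}) (F1 : {set E}) (A2 : {set T}) (F2 : {set E}) (K : {set E}) : Prop :=
  [/\ [/\ A = A1 :|: A2, [disjoint A1 & A2] & F = F1 :|: F2 :|: K],
      [/\ [disjoint F1 & F2], [disjoint F1 & K] & [disjoint F2 & K]],
      [/\ is_graph A1 F1, is_graph A2 F2, A1 != set0 & A2 != set0],
      connectedG A1 F1 /\ connectedG A2 F2 &
      #|K| = k /\
      {in K, forall e, ((src e \in A1) && (tgt e \in A2)) ||
                       ((src e \in A2) && (tgt e \in A1))}].

End MultiGraphs.

(* Main.v *)
Require Import Defs.
From mathcomp Require Import all_boot all_order.
Set Implicit Arguments. Unset Strict Implicit. Unset Printing Implicit Defensive.

Lemma adj_sub (T E : finType) (src tgt : E -> T) (F F' : {set E}) x y :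
  F \subset F' -> connect (adj src tgt F) x y -> connect (adj src tgt F') x y.
Proof.
move=> sFF'; apply: connect_sub => u v /existsP[e /andP[eF H]].
apply: connect1; apply/existsP; exists e; rewrite (subsetP sFF') //.
Qed.

Lemma conn_sub (T E : finType) (src tgt : E -> T) (A : {set T}) (F F' : {set E}) :
  F \subset F' -> connectedG src tgt A F -> connectedG src tgt A F'.
Proof.
move=> sFF' /forallP H; apply/forallP => x; apply/implyP => xA.
apply/forallP => y; apply/implyP => yA.
move: (H x) => /implyP/(_ xA)/forallP/(_ y)/implyP/(_ yA).
exact: adj_sub.
Qed.

Lemma adj0 (T E : finType) (src tgt : E -> T) x y :
  connect (adj src tgt set0) x y -> x = y.
Proof.
move=> /connectP[[|z p] /= P ->] //.
move: P => /andP[/existsP[e]]; by rewrite inE.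
Qed.

Lemma adj_closed (T E : finType) (src tgt : E -> T) (B : {set T}) (R : {set E}) x y :
  (forall f, f \in R -> (src f \in B) = (tgt f \in B)) ->
  connect (adj src tgt R) x y -> (x \in B) = (y \in B).
Proof.
move=> HR; apply: closed_connect => u v /existsP[e /andP[eR /orP[]]]
  /andP[/eqP <- /eqP <-]; rewrite HR //.
Qed.

Lemma sum_disj (I E : finType) (X : I -> {set E}) (s : seq I) :
  uniq s -> (forall i j, i != j -> [disjoint X i & X j]) ->
  \sum_(i <- s) #|X i| = #|\bigcup_(i <- s) X i|.
Proof.
move=> + Hd; elim: s => [|a s IH] /=; first by rewrite !big_nil cards0.
move=> /andP[nas us]; rewrite !big_cons IH //.
have: [disjoint X a & \bigcup_(i <- s) X i].
  have: forall i, i \in s -> [disjoint X a & X i].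
    by move=> i is_; apply: Hd; apply: contraNneq nas => ->.
  elim: s {IH us nas} => [|b s IH2] Hs; first by rewrite big_nil disjoints_subset setC0 subsetT.
  rewrite big_cons disjoints_subset setCU subsetI -!disjoints_subset.
  rewrite Hs ?mem_head //=; apply: IH2 => i is_; by apply: Hs; rewrite inE is_ orbT.
move=> D; case: (leq_card_setU (X a) (\bigcup_(i <- s) X i)) => _.
by rewrite D => /eqP ->.
Qed.

Lemma min_tree (T E : finType) (src tgt : E -> T) (B : {set T}) (S : {set E}) :
  connectedG src tgt B S -> exists S' : {set E}, [/\ S' \subset S, connectedG src tgt B S' &
     [forall e in S', ~~ connectedG src tgt B (S' :\ e)]].
Proof.
move: {2}#|S| (leqnn #|S|) => n; elim: n S => [|n IH] S Hn HS.
  exists S; split => //; apply/forallP => e; apply/implyP => eS.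
  by move: Hn; rewrite leqn0 cards_eq0 => /eqP SE; rewrite SE inE in eS.
case Hf: [forall e in S, ~~ connectedG src tgt B (S :\ e)].
  by exists S; split.
move/negbT: Hf; rewrite negb_forall => /existsP[e]; rewrite negb_imply negbK.
move=> /andP[eS HSe].
have [|S' [s1 s2 s3]] := IH (S :\ e) _ HSe.
  by move: Hn; rewrite (cardsD1 e S) eS.
exists S'; split => //; apply: subset_trans s1 _; exact: subD1set.
Qed.

Lemma adj_sym (T E : finType) (src tgt : E -> T) (F : {set E}) :
  symmetric (adj src tgt F).
Proof.
move=> x y; apply/existsP/existsP => -[e /andP[eF H]]; exists e; rewrite eF orbC //.
Qed.

Lemma conn_side (T E : finType) (src tgt : E -> T) (A B : {set T}) (Tr : {set E}) a :
 a \in B -> B \subset A -> connectedG src tgt A Tr ->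
 (forall f, f \in Tr -> src f \in B -> tgt f \notin B -> src f = a) ->
 (forall f, f \in Tr -> tgt f \in B -> src f \notin B -> tgt f = a) ->
 connectedG src tgt B [set f in Tr | (src f \in B) && (tgt f \in B)].
Proof.
move=> aB sBA /forallP Hc H1 H2.
set R := adj src tgt [set f in Tr | (src f \in B) && (tgt f \in B)].
have key : forall u, u \in B -> connect R u a.
  move=> u uB.
  move: (Hc u) => /implyP/(_ (subsetP sBA _ uB))/forallP/(_ a)/implyP
    /(_ (subsetP sBA _ aB))/connectP[p Hp Hl].
  elim: p u uB Hp Hl => [|w p IH] u uB /=; first by move=> _ ->.
  move=> /andP[/existsP[f /andP[fT Hf]] Hp] Hl.
  case wB: (w \in B).
    apply: connect_trans (IH w wB Hp Hl); apply: connect1.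
    apply/existsP; exists f; rewrite inE fT /=.
    by rewrite Hf andbT; case/orP: Hf => /andP[/eqP -> /eqP ->]; rewrite uB wB.
  case/orP: Hf => /andP[/eqP su /eqP tw].
    by rewrite -(H1 f fT) ?su ?tw ?wB.
  by rewrite -(H2 f fT) ?su ?tw ?wB.
apply/forallP => x; apply/implyP => xB; apply/forallP => y; apply/implyP => yB.
apply: connect_trans (key x xB) _.
by rewrite (sym_connect_sym (adj_sym _ _ _)) key.
Qed.

Lemma sum_le_card (E : finType) k (Us : 'I_k -> {set E}) (X : {set E}) :
  (forall i j, i != j -> [disjoint Us i & Us j]) ->
  \sum_(i < k) #|Us i :&: X| <= #|X|.
Proof.
move=> Hd.
have -> : \sum_(i < k) #|Us i :&: X| = \sum_(i <- index_enum 'I_k) #|Us i :&: X| by [].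
rewrite sum_disj ?index_enum_uniq //.
  apply: subset_leq_card; apply/bigcupsP => i _; exact: subsetIr.
move=> i j /Hd; apply: disjointW; exact: subsetIl.
Qed.

Lemma count_le (E : finType) k (Us : 'I_k -> {set E}) (X : {set E}) :
  (forall i j, i != j -> [disjoint Us i & Us j]) ->
  (forall i, Us i :&: X != set0) -> k <= #|X|.
Proof.
move=> Hd Hn; apply: leq_trans (sum_le_card X Hd).
have Hk1 : \sum_(i < k) 1 = k by rewrite sum1_card card_ord.
apply: leq_trans (_ : \sum_(i < k) 1 <= _); first by rewrite Hk1.
by apply: leq_sum => i _; rewrite card_gt0.
Qed.

Lemma count_eq1 (E : finType) k (Us : 'I_k -> {set E}) (X : {set E}) :
  (forall i j, i != j -> [disjoint Us i & Us j]) ->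
  (forall i, Us i :&: X != set0) -> #|X| <= k -> forall i, #|Us i :&: X| = 1.
Proof.
move=> Hd Hn Hk i0; apply/eqP; rewrite eqn_leq card_gt0 Hn andbT.
rewrite leqNgt; apply/negP => H2.
have := leq_trans (sum_le_card X Hd) Hk.
apply/negP; rewrite -ltnNge.
have Hk1 : \sum_(i < k) 1 = k by rewrite sum1_card card_ord.
apply: leq_trans (_ : (\sum_(i < k) 1).+1 <= _); first by rewrite Hk1.
rewrite (bigD1 i0) //= (bigD1 i0 (F := fun i => #|Us i :&: X|)) //= -addSn leq_add //.
by apply: leq_sum => i _; rewrite card_gt0.
Qed.

Lemma bigmin_le (I : finType) (P : pred I) (f : I -> nat) d i0 :
  P i0 -> \big[minn/d]_(i | P i) f i <= f i0.
Proof.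
move=> Pi; rewrite unlock.
have : i0 \in index_enum I by rewrite mem_index_enum.
elim: (index_enum I) => [|a r IH] //=.
rewrite inE => /orP[/eqP <-|ir]; first by rewrite Pi geq_minl.
case: (P a) => /=; [exact: leq_trans (geq_minr _ _) (IH ir) | exact: IH].
Qed.

Lemma conn_nonempty (T E : finType) (src tgt : E -> T) (B : {set T}) (S : {set E}) :
  1 < #|B| -> connectedG src tgt B S -> S != set0.
Proof.
move=> /card_gt1P[x [y [xB yB xy]]] /forallP/(_ x)/implyP/(_ xB)/forallP/(_ y)/implyP/(_ yB).
apply: contraTneq => ->; apply/negP => /adj0 exy; by rewrite exy eqxx in xy.
Qed.

Lemma side (T E : finType) (src tgt : E -> T) (k : nat) (A B : {set T}) (F K : {set E})
  (Ts : 'I_k -> {set E}) :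
 0 < k -> B \subset A ->
 (forall f, f \in F -> (f \in K) = ((src f \in B) != (tgt f \in B))) ->
 (forall i, spanning_tree src tgt A F (Ts i)) ->
 (forall i j, i != j -> [disjoint Ts i & Ts j]) ->
 (forall i, #|Ts i :&: K| = 1) ->
 tau_bar src tgt A F = k -> kappa'_bar src tgt A F = k ->
 connectedG src tgt B [set f in F | (src f \in B) && (tgt f \in B)] /\
 (1 < #|B| -> all_eq_k src tgt k B [set f in F | (src f \in B) && (tgt f \in B)]).
Proof.
move=> k0 sBA HK HT Hd H1 Htb Hkb.
set FB := [set f in F | (src f \in B) && (tgt f \in B)].
have sFB : FB \subset F by apply/subsetP => f; rewrite inE => /andP[].
have gFB : is_graph src tgt B FB by apply/forallP => f; apply/implyP; rewrite inE => /andP[].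
have step1 : forall i, connectedG src tgt B (Ts i :&: FB).
  move=> i; have /and3P[sTF cT _] := HT i.
  have /cards1P[e He] : #|Ts i :&: K| == 1 by rewrite H1.
  have : e \in Ts i :&: K by rewrite He set11.
  rewrite inE => /andP[eT eK].
  have eF := subsetP sTF _ eT.
  have cr : (src e \in B) != (tgt e \in B) by rewrite -HK.
  have fe : forall f, f \in Ts i -> (src f \in B) != (tgt f \in B) -> f = e.
    move=> f fT fc; apply/set1P; rewrite -He inE fT HK //; exact: subsetP sTF _ fT.
  set a := if src e \in B then src e else tgt e.
  have aB : a \in B by rewrite /a; case sB: (src e \in B) => //; move: cr; rewrite sB; case: (tgt e \in B).
  apply: conn_sub (conn_side aB sBA cT _ _).
    apply/subsetP => f; rewrite !inE => /andP[fT /andP[s t]]; by rewrite fT s t (subsetP sTF _ fT).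
  - move=> f fT sB tB; have Hf : f = e by apply: fe fT _; rewrite sB (negbTE tB).
    by move: sB; rewrite Hf /a => ->.
  - move=> f fT tB sB; have Hf : f = e by apply: fe fT _; rewrite tB (negbTE sB).
    by move: sB; rewrite Hf /a => /negbTE ->.
have /fin_all_exists [Us HUs] : forall i, exists U : {set E},
    [/\ U \subset Ts i :&: FB, connectedG src tgt B U &
     [forall e in U, ~~ connectedG src tgt B (U :\ e)]].
  by move=> i; have [U [s c m]] := min_tree (step1 i); exists U.
have UsT : forall i, spanning_tree src tgt B FB (Us i).
  move=> i; have [s c m] := HUs i; apply/and3P; split => //.
  apply: subset_trans s _; exact: subsetIr.
have Ud : forall i j, i != j -> [disjoint Us i & Us j].
  move=> i j /Hd; apply: disjointW.
  - by case: (HUs i) => s _ _; apply: subset_trans s (subsetIl _ _).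
  - by case: (HUs j) => s _ _; apply: subset_trans s (subsetIl _ _).
have cFB : connectedG src tgt B FB.
  by case: (HUs (Ordinal k0)) => s c _; apply: conn_sub c; apply: subset_trans s (subsetIr _ _).
split => // B1.
have ht : has_trees src tgt B FB k.
  apply/existsP; exists [ffun i => Us i]; apply/andP; split.
    by apply/forallP => i; rewrite ffunE.
  by apply/forallP => i; apply/forallP => j; apply/implyP => ij; rewrite !ffunE Ud.
have Unz : forall i, Us i != set0.
  by move=> i; case: (HUs i) => _ c _; exact: conn_nonempty B1 c.
have kFB : k <= #|FB|.
  apply: (count_le (Us := Us)) => // i.
  by case: (HUs i) => s _ _; rewrite (setIidPl (subset_trans s (subsetIr _ _))).
have leA : forall (B' : {set T}) (H : {set E}), B' \subset A -> H \subset F -> is_graph src tgt B' H -> 1 < #|B'| ->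
    tau_nat src tgt B' H <= k /\ kappa' src tgt B' H <= k.
  move=> B' H sB' sH gH cB'; rewrite -{1}Htb -Hkb; split.
    apply: leq_trans (leq_bigmax_cond _ sB'); apply: leq_bigmax_cond.
    by rewrite sH gH cB'.
  apply: leq_trans (leq_bigmax_cond _ sB'); apply: leq_bigmax_cond.
  by rewrite sH gH cB'.
have [tle kle] := leA B FB sBA sFB gFB B1.
have tauk : tau_nat src tgt B FB = k.
  apply/eqP; rewrite eqn_leq tle /=.
  have kI : k < #|FB|.+1 by rewrite ltnS.
  rewrite /tau_nat; exact: (@leq_bigmax_cond _ (fun t : 'I_#|FB|.+1 => has_trees src tgt B FB t) (fun t => nat_of_ord t) (Ordinal kI) ht).
have kapk : kappa' src tgt B FB = k.
  apply/eqP; rewrite eqn_leq kle /=.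
  apply: (big_ind (fun n => k <= n)) => //.
    by move=> x y; rewrite leq_min => -> ->.
  move=> S /andP[sS nc]; apply: (count_le (Us := Us)) => // i.
  apply: contra nc => /eqP HS.
  have /and3P[sU cU _] := UsT i.
  apply: conn_sub cU; apply/subsetP => f fU; rewrite inE (subsetP sU _ fU) andbT.
  apply/negP => fS; have : f \in Us i :&: S by rewrite inE fU fS.
  by rewrite HS inE.
split.
- by rewrite /tau leqNgt B1 /= tauk.
- apply/eqP; rewrite eqn_leq; apply/andP; split.
    apply/bigmax_leqP => B' sB'; apply/bigmax_leqP => H /and3P[sH gH cB'].
    exact: (leA B' H (subset_trans sB' sBA) (subset_trans sH sFB) gH cB').1.
  rewrite -{1}tauk; apply: leq_trans (leq_bigmax_cond _ (subxx B)).
  by apply: leq_bigmax_cond; rewrite subxx gFB B1.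
- exact: kapk.
- apply/eqP; rewrite eqn_leq; apply/andP; split.
    apply/bigmax_leqP => B' sB'; apply/bigmax_leqP => H /and3P[sH gH cB'].
    exact: (leA B' H (subset_trans sB' sBA) (subset_trans sH sFB) gH cB').2.
  rewrite -{1}kapk; apply: leq_trans (leq_bigmax_cond _ (subxx B)).
  by apply: leq_bigmax_cond; rewrite subxx gFB B1.
Qed.

Lemma disj_el (X : finType) (A B : {set X}) :
  (forall z, z \in A -> z \in B -> False) -> [disjoint A & B].
Proof.
move=> H; rewrite -setI_eq0; apply/eqP/setP => z; rewrite inE in_set0.
by apply/negP => /andP[/H zA /zA].
Qed.

Theorem lemma3p7 (T E : finType) (src tgt : E -> T)
  (loopless : forall e : E, src e != tgt e)
  (A : {set T}) (F : {set E}) (k : nat) :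
  0 < k -> is_graph src tgt A F -> all_eq_k src tgt k A F ->
  exists (A1 A2 : {set T}) (F1 F2 K : {set E}),
    [/\ edge_join src tgt k A F A1 F1 A2 F2 K,
        (#|A1| = 1 /\ F1 = set0) \/ all_eq_k src tgt k A1 F1 &
        (#|A2| = 1 /\ F2 = set0) \/ all_eq_k src tgt k A2 F2].
Proof.
move=> k0 gAF [Htau Htb Hk Hkb].
have gF : forall f, f \in F -> (src f \in A) && (tgt f \in A).
  by move=> f fF; move/forallP: gAF => /(_ f)/implyP; apply.
have [A1gt tauk] : 1 < #|A| /\ tau_nat src tgt A F = k.
  by move: Htau; rewrite /tau; case: ifP => // /negbT; rewrite -ltnNge => ? [].
have : has_trees src tgt A F (tau_nat src tgt A F).
  rewrite /tau_nat; apply: (big_ind (has_trees src tgt A F)) => //.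
  - apply/existsP; exists [ffun i : 'I_0 => set0]; apply/andP; split; apply/forallP => -[] //.
  - by move=> x y Hx Hy; rewrite /maxn; case: ifP.
rewrite tauk => /existsP[Ts /andP[/forallP HT /forallP Hd']].
have Hd : forall i j, i != j -> [disjoint Ts i & Ts j].
  by move=> i j ij; move: (Hd' i) => /forallP/(_ j)/implyP; apply.
have [S [sSF nc cS]] : exists S : {set E},
    [/\ S \subset F, ~~ connectedG src tgt A (F :\: S) & #|S| = k].
  rewrite -Hk /kappa'; apply: (big_ind (fun n => exists S : {set E},
    [/\ S \subset F, ~~ connectedG src tgt A (F :\: S) & #|S| = n])).
  - exists F; split => //; rewrite setDv; apply/negP => /(conn_nonempty A1gt).
    by rewrite eqxx.
  - by move=> x y Hx Hy; rewrite /minn; case: ifP.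
  - by move=> S /andP[sS nS]; exists S.
move: nc; rewrite negb_forall => /existsP[x]; rewrite negb_imply => /andP[xA].
rewrite negb_forall => /existsP[y]; rewrite negb_imply => /andP[yA nxy].
have [A1 HA1] : exists A1 : {set T}, A1 = [set z in A | connect (adj src tgt (F :\: S)) x z].
  by eexists.
have mA1 : forall z, (z \in A1) = (z \in A) && connect (adj src tgt (F :\: S)) x z.
  by move=> z; rewrite HA1 inE.
have sA1 : A1 \subset A by apply/subsetP => z; rewrite mA1 => /andP[].
have xA1 : x \in A1 by rewrite mA1 xA connect0.
have yA1 : y \notin A1 by rewrite mA1 yA.
set A2 := A :\: A1.
have mA2 : forall z, z \in A -> (z \in A2) = (z \notin A1).
  by move=> z zA; rewrite in_setD zA andbT.
set K := [set f in F | (src f \in A1) != (tgt f \in A1)].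
have HK1 : forall f, f \in F -> (f \in K) = ((src f \in A1) != (tgt f \in A1)).
  by move=> f fF; rewrite inE fF.
have HK2 : forall f, f \in F -> (f \in K) = ((src f \in A2) != (tgt f \in A2)).
  move=> f fF; have /andP[sA tA] := gF f fF.
  by rewrite HK1 // !mA2 //; case: (src f \in A1); case: (tgt f \in A1).
have sKS : K \subset S.
  apply/subsetP => f fK; apply/negPn/negP => fS.
  have fF : f \in F by move: fK; rewrite inE => /andP[].
  have fFS : f \in F :\: S by rewrite in_setD fS fF.
  move: fK; rewrite HK1 //; have /andP[sA tA] := gF f fF.
  have e1 : adj src tgt (F :\: S) (src f) (tgt f)
    by apply/existsP; exists f; rewrite fFS !eqxx.
  have e2 : adj src tgt (F :\: S) (tgt f) (src f)
    by apply/existsP; exists f; rewrite fFS !eqxx orbT.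
  rewrite !mA1 sA tA /=.
  case s1: (connect _ x (src f)); case t1: (connect _ x (tgt f)) => //.
  + by rewrite (connect_trans s1 (connect1 e1)) in t1.
  + by rewrite (connect_trans t1 (connect1 e2)) in s1.
have ncK : ~~ connect (adj src tgt (F :\: K)) x y.
  apply/negP => /(adj_closed (B := A1)) H.
  have : (x \in A1) = (y \in A1).
    apply: H => f; rewrite in_setD => /andP[nK fF].
    by move: nK; rewrite HK1 // negbK => /eqP.
  by rewrite xA1 (negbTE yA1).
have cK : #|K| = k.
  apply/eqP; rewrite eqn_leq -{1}cS subset_leq_card //= -Hk /kappa'.
  apply: bigmin_le; apply/andP; split.
    by apply/subsetP => f; rewrite inE => /andP[].
  apply/negP => /forallP/(_ x)/implyP/(_ xA)/forallP/(_ y)/implyP/(_ yA).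
  exact/negP.
have TK : forall i, Ts i :&: K != set0.
  move=> i; apply/negP => /eqP HS; move/negP: ncK; apply.
  have /and3P[sT cT _] := HT i.
  move: cT => /forallP/(_ x)/implyP/(_ xA)/forallP/(_ y)/implyP/(_ yA).
  apply: adj_sub; apply/subsetP => f fT; rewrite in_setD (subsetP sT _ fT) andbT.
  apply/negP => fK; have : f \in Ts i :&: K by rewrite inE fT fK.
  by rewrite HS inE.
have T1 : forall i, #|Ts i :&: K| = 1.
  by apply: (count_eq1 (Us := Ts)) => //; rewrite cK.
have sA2 : A2 \subset A by apply: subsetDl.
have [c1 s1] := side k0 sA1 HK1 HT Hd T1 Htb Hkb.
have [c2 s2] := side k0 sA2 HK2 HT Hd T1 Htb Hkb.
have triv : forall B : {set T}, 0 < #|B| -> #|B| <= 1 ->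
    #|B| = 1 /\ [set f in F | (src f \in B) && (tgt f \in B)] = set0.
  move=> B h0 h; split; first by apply/eqP; rewrite eqn_leq h h0.
  apply/setP => f; rewrite inE in_set0; apply/negP => /andP[_ /andP[s t]].
  move/card_le1P: h => /(_ _ s) /(_ (tgt f)); rewrite t inE => /esym/eqP et.
  by move: (loopless f); rewrite et eqxx.
exists A1, A2, [set f in F | (src f \in A1) && (tgt f \in A1)],
  [set f in F | (src f \in A2) && (tgt f \in A2)], K; split.
- split.
  + split.
    * apply/setP => z; rewrite in_setU in_setD; case zA: (z \in A).
        by rewrite andbT orbN.
      rewrite andbF orbF; apply/esym/negP => /(subsetP sA1); by rewrite zA.
    * by apply: disj_el => z z1; rewrite in_setD z1.
    * apply/setP => f; rewrite !inE; case fF: (f \in F) => //=.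
      move/andP: (gF f fF) => [-> ->].
      by case: (src f \in A1); case: (tgt f \in A1).
  + split; apply: disj_el => f; rewrite !inE;
    by case: (f \in F); case: (src f \in A1); case: (tgt f \in A1);
       case: (src f \in A); case: (tgt f \in A).
  + split.
    * by apply/forallP => f; apply/implyP; rewrite inE => /andP[_ ->].
    * by apply/forallP => f; apply/implyP; rewrite inE => /andP[_ ->].
    * by apply/set0Pn; exists x.
    * by apply/set0Pn; exists y; rewrite mA2 // yA1.
  + by split.
  + split => // f; rewrite inE => /andP[fF].
    move/andP: (gF f fF) => [sA tA]; rewrite !mA2 //.
    by case: (src f \in A1); case: (tgt f \in A1).
- case: (leqP #|A1| 1) => h; last by right; exact: s1.
  by left; apply: triv h; apply/card_gt0P; exists x.
- case: (leqP #|A2| 1) => h; last by right; exact: s2.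
  by left; apply: triv h; apply/card_gt0P; exists y; rewrite mA2 // yA1.
Qed.
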